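(* Let $p$ be an odd prime and $k\ge1$. For $0\le l<p^k$, $$\mathcal M_{V_{2,l}}=\begin{cases}\frac{p-1}{2}(2p+1), & l<\frac{p^k-1}{2},\\[2pt] \frac{p-1}{2}(2p-1), & l\ge\frac{p^k-1}{2}.\end{cases}$$
   Context: Fix an odd prime $p$ and an integer $k\ge 0$. For integers $0\le i<n$ write $\lambda(n,i)=(n-i,1^i)$ for the hook partition of $n$ with $n-i$ boxes in its first row and $i$ further boxes in its first column. If $\mu=\lambda(n',i')$ is obtained from $\lambda(n,i)$ by appending $m=(n'-i')-(n-i)\ge 0$ boxes to the first row and $n''=i'-i\ge 0$ boxes to the first column, we say $\mu$ is obtained by adding the block $B_{m,n''}$ ($m$ horizontal nodes, $n''$ vertical nodes). Put $x_s=p^k(sp-(s+1))$. The relevant part (''column $k$'') of the $p$-Bratteli diagram is the graded directed graph with vertices: on floor $2k+1$, $S_i=\lambda(p^k(p-1),i)$ for $0\le i<p^k(p-1)$; on floor $2(k+s)$ ($s\ge1$), $V_{s,l}=\lambda\big(p^k(2sp-(2s+1)),\,x_s+l\big)$ for $0\le l<p^k$; on floor $2(k+s)-1$ ($s\ge2$), $W_{s,l'}=\lambda\big(p^k((2s-1)p-2s),\,x_{s-1}+l'\big)$ for $0\le l'<p^{k+1}$; and edges, each labelled by the block added: (E1) $S_i\to V_{1,l}$ exactly when $i=p^kt+l$ with $0\le t\le p-2$, block $B_{p^kt,\,p^k(p-2-t)}$; (E2) for $s\ge2$, $0\le l<p^k$, $0\le\beta\le p-1$: $V_{s-1,l}\to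 W_{s,pl+\beta}$, block $B_{p^k(p-1)-((p-1)l+\beta),\,(p-1)l+\beta}$; (E3) for $s\ge 2$, $0\le l'<p^{k+1}$ and $t=\lfloor l'/p^k\rfloor$: $W_{s,l'}\to V_{s,l'-p^kt}$, block $B_{p^kt,\,p^k(p-1-t)}$. A path ending at a vertex $v$ is a sequence of edges starting at some $S_i$ and going up one floor at a time to $v$ ($S_i\to V_{1,\cdot}\to W_{2,\cdot}\to V_{2,\cdot}\to W_{3,\cdot}\to\cdots\to v$); $\mathcal P(v)$ is the set of all paths ending at $v$. The blocks of a path are numbered $B^2,B^3,\dots,B^N$: $B^2$ is the block of the edge leaving $S_i$, and for $j\ge2$, $B^{2j-1}$ is the block of the edge into $W_{j,\cdot}$ and $B^{2j}$ the block of the edge into $V_{j,\cdot}$. Write $B^j=B_{m_j,n_j}$. Descents: $1\in\mathrm{Des}(P)$ iff $m_2=p^kt$ with $0\le t<\frac{p-1}{2}$; $2\notin\mathrm{Des}(P)$; for $3\le j<N$, $j\in\mathrm{Des}(P)$ iff $m_j>m_{j+1}$ and $n_j<n_{j+1}$. $\mathrm{des}(P)=|\mathrm{Des}(P)|$. The $p^k$-Fibonacci number of a vertex $v$ is $\mathcal M_v=\sum_{P\in\mathcal P(v)}\mathrm{des}(P)$. *)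

(* Defs.v *)
From mathcomp Require Import all_boot.

Set Implicit Arguments.
Unset Strict Implicit.
Unset Printing Implicit Defensive.

(* Column k of the p-Bratteli diagram.  Vertices are represented by their
   index: S_i by i, V_{s,l} by l, W_{s,l'} by l' (the floor is determined by
   the position in a path).  Between two vertices there is at most one edge,
   so a path is determined by its sequence of vertices. *)

(* (E1)  S_i -> V_{1,l} *)
Definition edge1 (p k i l : nat) : bool :=
  [&& i < p ^ k * (p - 1), l < p ^ k &
      [exists t : 'I_(p - 1), i == p ^ k * t + l]].

(* (E2)  V_{s-1,l} -> W_{s,w} *)
Definition edge2 (p k l w : nat) : bool :=
  [&& l < p ^ k, w < p ^ k.+1 & [exists b : 'I_p, w == p * l + b]].

(* (E3)  W_{s,w} -> V_{s,l} *)
Definition edge3 (p k w l : nat) : bool :=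
  [&& w < p ^ k.+1, l < p ^ k & l == w - p ^ k * (w %/ p ^ k)].

(* A path ending at V_{s,l}, as the vertex-index sequence
   x = [:: i; l_1; w_2; l_2; w_3; l_3; ...; w_s; l_s]  (size 2s), where
   x_0 = S index, x_(2j-1) = V_j index, x_(2j) = W_(j+1) index. *)
Definition is_path (p k s l : nat) (x : seq nat) : bool :=
  [&& 0 < s, size x == 2 * s,
      edge1 p k (nth 0 x 0) (nth 0 x 1),
      all (fun j => edge2 p k (nth 0 x (2 * j - 1)) (nth 0 x (2 * j))
                    && edge3 p k (nth 0 x (2 * j)) (nth 0 x (2 * j + 1)))
          (iota 1 (s - 1))
    & nth 0 x (2 * s - 1) == l].

(* The block B^J = B_{m_J, n_J} (2 <= J <= N = size x) is the label of the
   edge from x_(J-2) to x_(J-1). *)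
Definition block (p k : nat) (x : seq nat) (J : nat) : nat * nat :=
  let a := nth 0 x (J - 2) in
  let b := nth 0 x (J - 1) in
  if J == 2 then
    let t := a %/ p ^ k in (p ^ k * t, p ^ k * (p - 2 - t))
  else if odd J then
    let beta := b - p * a in
    (p ^ k * (p - 1) - ((p - 1) * a + beta), (p - 1) * a + beta)
  else
    let t := a %/ p ^ k in (p ^ k * t, p ^ k * (p - 1 - t)).

Definition mblk p k x J := (block p k x J).1.
Definition nblk p k x J := (block p k x J).2.

Definition in_Des (p k : nat) (x : seq nat) (j : nat) : bool :=
  if j == 1 then 2 * (nth 0 x 0 %/ p ^ k) < p - 1
  else if j == 2 then false
  else [&& 3 <= j, j < size x,
           mblk p k x j > mblk p k x j.+1 & nblk p k x j < nblk p k x j.+1].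

Definition Des (p k : nat) (x : seq nat) : seq nat :=
  [seq j <- iota 1 (size x - 1) | in_Des p k x j].

Definition des (p k : nat) (x : seq nat) : nat := size (Des p k x).

(* p^k-Fibonacci number of V_{s,l}: sum of des over all paths ending at
   V_{s,l}.  All vertex indices are < p^(k+1), so enumerating (2s)-tuples of
   'I_(p^(k+1)) covers every path exactly once. *)
Definition fibV (p k s l : nat) : nat :=
  \sum_(x : (2 * s).-tuple 'I_(p ^ k.+1) | is_path p k s l (map val x))
     des p k (map val x).

(* Main.v *)
Require Import Defs.
From mathcomp Require Import all_boot zify.
Lemma core h q a r b : r < 2*h+1 -> a < 2*q+1 -> b < 2*h+1 -> 1<=h ->
 ((2*h)*(a + (2*q+1)*b) + r + (2*h+1)*(2*q+1)*b < (2*h+1)*(2*q+1)*(2*h)) =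
   (b < h + (2*((2*h+1)*a+r) < (2*h+1)*(2*q+1) - 1)).
Proof.
move=> hr ha hb h1.
have [Hs|Hs] := boolP (2*((2*h+1)*a+r) < (2*h+1)*(2*q+1) - 1).
- have H2 : 2*h*a + r < h*(2*q+1).
    case: (ltngtP a q) => Ha.
    + have : a <= q - 1 by lia. move=> Ha'. nia.
    + nia.
    + subst a. nia.
  apply/idP/idP => H.
  + rewrite addn1 ltnS. case: (leqP b h) => // Hb. exfalso. nia.
  + have : b <= h by lia. move=> Hb. nia.
- have H2 : h*(2*q+1) <= 2*h*a + r.
    case: (ltngtP a q) => Ha.
    + exfalso. have : a <= q - 1 by lia. move=> Ha'. nia.
    + nia.
    + subst a. nia.
  rewrite addn0. apply/idP/idP => H.
  + case: (leqP h b) => // Hb. exfalso. nia.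
  + have : b <= h - 1 by lia. move=> Hb. nia.
Qed.

Lemma keyt (p Q : nat) : odd p -> odd Q -> 1 < p -> forall a r b, r < p -> a < Q -> b < p ->
 ((p-1)*(a+Q*b) + r + (p*Q)*b < (p*Q)*(p-1)) = (b < (p-1)%/2 + (a*p+r < (p*Q-1)%/2)).
Proof.
move=> op oQ p1 a r b rp aQ bp.
have [h eh] : exists h, p = 2*h+1 by exists p./2; rewrite -{1}(odd_double_half p) op; lia.
have [q eq] : exists q, Q = 2*q+1 by exists Q./2; rewrite -{1}(odd_double_half Q) oQ; lia.
subst. have -> : (2*h+1-1)%/2 = h by lia.
have -> : (a * (2 * h + 1) + r < ((2 * h + 1) * (2 * q + 1) - 1) %/ 2) =
   (2*((2*h+1)*a+r) < (2*h+1)*(2*q+1) - 1).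
  apply/idP/idP; nia.
rewrite (_ : 2*h+1-1 = 2*h); last lia.
by apply: core; lia.
Qed.



Lemma sum_lt n c : \sum_(i < n) (i < c) = minn c n.
Proof.
elim: n => [|n IH]; first by rewrite big_ord0 minn0.
rewrite big_ord_recr /= IH. case: (ltnP n c) => H /=; lia.
Qed.

Lemma des4 p k i l1 w l : des p k [:: i; l1; w; l] =
  (2 * (i %/ p ^ k) < p - 1) +
  [&& p ^ k * (w %/ p ^ k) < p ^ k * (p - 1) - ((p - 1) * l1 + (w - p * l1))
    & (p - 1) * l1 + (w - p * l1) < p ^ k * (p - 1 - w %/ p ^ k)].
Proof.
rewrite /des /Des /= /in_Des /= /mblk /nblk /block /=.
by case: (2 * _ < _); case: (_ && _).
Qed.

Theorem mainTheorem4 (p k l : nat) :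
  prime p -> odd p -> 1 <= k -> l < p ^ k ->
  fibV p k 2 l =
    (if l < (p ^ k - 1) %/ 2 then (p - 1) %/ 2 * (2 * p + 1)
     else (p - 1) %/ 2 * (2 * p - 1)).
Proof.
move=> pr op k1 lP.
have p2 := prime_gt1 pr.
have [p' ep] : exists p', p = p'.+3.
  exists (p - 3). case: p pr op p2 {lP} => [|[|[|[|]]]] //= ; lia.
have [N' eN] : exists N', p ^ k.+1 = N'.+1.
  exists (p ^ k.+1).-1. rewrite prednK // expn_gt0; lia.
rewrite /fibV eN.
set P := p ^ k.
have PN : p * P = N'.+1 by rewrite -eN expnS.
set Q := p ^ k.-1.
have PQ : P = p * Q by rewrite /P /Q -expnS prednK.
have Q1 : 0 < Q by rewrite expn_gt0; lia.
have la : l = l %/ p * p + l %% p := divn_eq l p.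
have lr : l %% p < p by rewrite ltn_mod; lia.
have lq : l %/ p < Q by rewrite ltn_divLR; lia.
have wdiv : forall b, (l + P * b) %/ p = l %/ p + Q * b.
  move=> b. have -> : l + P * b = (Q*b)*p + l by rewrite PQ; lia.
  by rewrite divnMDl; lia.
have wmod : forall b, (l + P * b) - p * ((l + P * b) %/ p) = l %% p.
  move=> b. rewrite wdiv. lia.
have Pdiv : forall a x, x < P -> (P * a + x) %/ P = a.
  move=> a x xP. by rewrite mulnC divnMDl ?divn_small ?addn0 //; lia.
pose hh (y : 'I_p'.+2 * 'I_p'.+3) : (2*2).-tuple 'I_N'.+1 :=
  [tuple inord (P*y.1 + (l+P*y.2)%/p); inord ((l+P*y.2)%/p); inord (l+P*y.2); inord l].
have mvh : forall y, map val (hh y) = [:: P*y.1 + (l+P*y.2)%/p; (l+P*y.2)%/p; l+P*y.2; l].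
  case=> [a b] /=. have := ltn_ord a. have := ltn_ord b. rewrite wdiv => Ha Hb.
  rewrite !inordK //; nia.
rewrite (reindex hh); last first.
  exists (fun x : (2*2).-tuple 'I_N'.+1 =>
     (inord (nth 0 (map val x) 0 %/ P) : 'I_p'.+2, inord (nth 0 (map val x) 2 %/ P) : 'I_p'.+3)).
  - case=> a b _. rewrite mvh /=. have := ltn_ord a. have := ltn_ord b. move=> Hb Ha.
    rewrite wdiv Pdiv; last nia.
    by rewrite addnC Pdiv // !inord_val.
  - case=> [[|x0 [|x1 [|x2 [|x3 []]]]] //= sx]. rewrite inE /is_path /= /edge1 /edge2 /edge3 /=.
    rewrite -/P.
    move=> /and3P [/and3P [H0 H1 /existsP [t /eqP et]] /andP [/and4P [/and3P [_ H2 /existsP [b /eqP eb]] _ _ /eqP e3] _] /eqP e4].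
    apply/val_inj/(inj_map val_inj). rewrite mvh /=.
    have Ht : x0 %/ P = t by rewrite et Pdiv.
    have dx2 := divn_eq x2 P.
    have HwP : x2 %/ P < p by rewrite ltn_divLR; [rewrite -/P; lia | rewrite /P expn_gt0; lia].
    have ew : l + P * (x2 %/ P) = x2 by lia.
    have ex1 : x2 %/ p = x1.
      rewrite eb mulnC divnMDl ?divn_small ?addn0 //; last lia.
    have := ltn_ord t; have := ltn_ord b. move=> tb bb.
    rewrite Ht !inordK; try lia. rewrite ew ex1 -et. congr [:: _; _; _; _]. lia.
have allp : forall j, is_path p k 2 l (map val (hh j)).
  case=> a b. rewrite mvh /is_path /= /edge1 /edge2 /edge3 -/P /=.
  have := ltn_ord a. have := ltn_ord b. move=> Hb Ha.
  have Hw : (l + P * b) %/ p < P by rewrite wdiv; nia.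
  have Hw2 : l + P * b < p ^ k.+1 by rewrite expnS -/P; nia.
  rewrite Hw Hw2 lP /= andbT.
  apply/and3P; split => //.
  - apply/andP; split; first nia.
    apply/existsP. have Ha' : a < p - 1 by lia. by exists (Ordinal Ha').
  - apply/andP; split. apply/existsP.
    have Hb' : (l + P * b) %% p < p by rewrite ltn_mod; lia.
    exists (Ordinal Hb'). apply/eqP => /=. rewrite {1}(divn_eq (l + P*b) p). lia.
    by rewrite addnC mulnC divnMDl ?divn_small //; lia.
have Pp : 0 < P by rewrite /P expn_gt0; lia.
rewrite (eq_bigl xpredT); last by move=> j; rewrite allp.
set c := (p - 1) %/ 2 + (l < (P - 1) %/ 2).
under eq_bigr => j _.
  rewrite mvh des4 -/P (Pdiv j.1); last by case: j => a b /=; rewrite wdiv; have := ltn_ord b; nia.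
  have wP : (l + P * j.2) %/ P = j.2 by rewrite addnC Pdiv.
  rewrite wP wmod.
  have jb : j.2 < p by rewrite ep ltn_ord.
  have -> : [&& P * j.2 < P * (p - 1) - ((p - 1) * ((l + P * j.2) %/ p) + l %% p)
     & (p - 1) * ((l + P * j.2) %/ p) + l %% p < P * (p - 1 - j.2)] = (j.2 < c).
    have K := @keyt p Q _ _ _ _ _ _ lr lq jb.
    rewrite -la -PQ in K. rewrite /c -K; try (by rewrite /Q oddX op orbT); try lia.
    rewrite wdiv [P * (p - 1 - _)]mulnBr.
    move: ((p - 1) * (l %/ p + Q * j.2) + l %% p) (P * j.2) (P * (p - 1)) => X Y Z.
    apply/idP/idP; [move/andP=> [] | move=> H; apply/andP]; lia.
  over.
rewrite /= -(pair_bigA _ (fun (i : 'I_p'.+2) (j : 'I_p'.+3) => (2 * i < p - 1) + (j < c))) /=.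
under eq_bigr => i _ do rewrite big_split /= sum_nat_const card_ord sum_lt.
rewrite big_split /= sum_nat_const card_ord -big_distrr /=.
have -> : \sum_(i < p'.+2) (2 * i < p - 1) = \sum_(i < p'.+2) (i < (p-1)%/2).
  by apply: eq_bigr => i _; congr nat_of_bool; apply/idP/idP; lia.
rewrite sum_lt /c.
have [h eh] : exists h, p = 2*h+1 by exists p./2; rewrite -{1}(odd_double_half p) op; lia.
have -> : (p-1)%/2 = h by lia.
have -> : minn h p'.+2 = h by lia.
case: (l < (P - 1) %/ 2); rewrite /=.
- have -> : minn (h + 1) p'.+3 = h + 1 by lia.
  have -> : p'.+3 = 2*h+1 by lia. have -> : p'.+2 = 2*h by lia.
  rewrite eh. nia.
- have -> : minn (h + 0) p'.+3 = h by lia.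
  have -> : p'.+3 = 2*h+1 by lia. have -> : p'.+2 = 2*h by lia.
  rewrite eh. nia.
Qed.
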